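(* Let $F\colon \mathcal{D}_1 \to \mathcal{D}_2$ be a symmetric monoidal dagger functor between fermionically dagger compact categories such that every iso-positive involution in $\mathcal{D}_2$ is the identity. Then $F$ is $B\mathbb{Z}/2$-equivariant, i.e. $F((-1)^F_{x}) = (-1)^F_{F(x)}$ for every object $x$ of $\mathcal{D}_1$.
   Context: A dagger category is a category $\mathcal{D}$ with a contravariant strict involution $\dagger\colon \mathcal{D}\to\mathcal{D}^{\mathrm{op}}$ that is the identity on objects. A symmetric monoidal dagger category is a dagger category that is also symmetric monoidal such that $\otimes$ is a $\dagger$-functor and the unitors, associator and braiding $\sigma$ are unitary ($f^\dagger=f^{-1}$). A symmetric monoidal dagger functor is a symmetric monoidal functor $F$ that is a dagger functor ($F(f^\dagger)=F(f)^\dagger$) and whose structure isomorphisms $F(c_1)\otimes F(c_2)\to F(c_1\otimes c_2)$ and $1\to F(1)$ are unitary. Each $\mathcal{D}_i$ comes with a unitary monoidal $B\mathbb{Z}/2$-action, i.e. a monoidal natural involution $(-1)^F\colon \mathrm{id}\Rightarrow \mathrm{id}$ of the identity functor with each component unitary. An endomorphism $f\colon c\to c$ is iso-positive if $f=g^\dagger g$ for some isomorphism $g\colon c\to c'$. A symmetric monoidal dagger category $\mathcal{D}$ with such a $B\mathbb{Z}/2$-action is fermionically dagger compact if it has duals and, for every object $x$, the standard dual functor of its Hermitian completion sends $x$ (with trivial Hermitian pairing) to a dual whose dual Hermitian pairing, after twisting by $(-1)^F_{x^*}$, is again iso-positive; equivalently (as stated in the paper), every object $x$ admits a duality $\mathrm{ev}_x\colon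 x^*\otimes x\to 1$, $\mathrm{coev}_x\colon 1\to x\otimes x^*$ such that $\sigma_{x^*,x}\circ \mathrm{ev}_x^\dagger = ((-1)^F_x\otimes \mathrm{id}_{x^*})\circ \mathrm{coev}_x$. *)

(* Defs.v *)
(** A symmetric monoidal dagger category equipped with a unitary monoidal
    BZ/2-action (-1)^F (field [par]).  Morphisms are compared with Leibniz
    equality. *)
Record SMDC : Type := {
  ob : Type;
  hom : ob -> ob -> Type;
  idm : forall a, hom a a;
  comp : forall {a b c}, hom b c -> hom a b -> hom a c;
  comp_id_l : forall a b (f : hom a b), comp (idm b) f = f;
  comp_id_r : forall a b (f : hom a b), comp f (idm a) = f;
  comp_assoc : forall a b c d (f : hom a b) (g : hom b c) (h : hom c d),
      comp h (comp g f) = comp (comp h g) f;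
  dag : forall {a b}, hom a b -> hom b a;
  dag_invol : forall a b (f : hom a b), dag (dag f) = f;
  dag_comp : forall a b c (f : hom a b) (g : hom b c),
      dag (comp g f) = comp (dag f) (dag g);
  dag_id : forall a, dag (idm a) = idm a;
  tens : ob -> ob -> ob;
  tensm : forall {a b c d}, hom a b -> hom c d -> hom (tens a c) (tens b d);
  tens_id : forall a b, tensm (idm a) (idm b) = idm (tens a b);
  tens_comp : forall a b c a' b' c' (f : hom a b) (f' : hom b c)
      (g : hom a' b') (g' : hom b' c'),
      tensm (comp f' f) (comp g' g) = comp (tensm f' g') (tensm f g);
  dag_tens : forall a b c d (f : hom a b) (g : hom c d),
      dag (tensm f g) = tensm (dag f) (dag g);
  unit : ob;
  lam : forall a, hom (tens unit a) a;
  rho : forall a, hom (tens a unit) a;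
  asc : forall a b c, hom (tens (tens a b) c) (tens a (tens b c));
  sym : forall a b, hom (tens a b) (tens b a);
  lam_unitary_l : forall a, comp (dag (lam a)) (lam a) = idm _;
  lam_unitary_r : forall a, comp (lam a) (dag (lam a)) = idm _;
  rho_unitary_l : forall a, comp (dag (rho a)) (rho a) = idm _;
  rho_unitary_r : forall a, comp (rho a) (dag (rho a)) = idm _;
  asc_unitary_l : forall a b c, comp (dag (asc a b c)) (asc a b c) = idm _;
  asc_unitary_r : forall a b c, comp (asc a b c) (dag (asc a b c)) = idm _;
  sym_unitary_l : forall a b, comp (dag (sym a b)) (sym a b) = idm _;
  sym_unitary_r : forall a b, comp (sym a b) (dag (sym a b)) = idm _;
  lam_nat : forall a b (f : hom a b),
      comp (lam b) (tensm (idm unit) f) = comp f (lam a);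
  rho_nat : forall a b (f : hom a b),
      comp (rho b) (tensm f (idm unit)) = comp f (rho a);
  asc_nat : forall a b c a' b' c' (f : hom a a') (g : hom b b') (h : hom c c'),
      comp (asc a' b' c') (tensm (tensm f g) h)
      = comp (tensm f (tensm g h)) (asc a b c);
  sym_nat : forall a b c d (f : hom a b) (g : hom c d),
      comp (sym b d) (tensm f g) = comp (tensm g f) (sym a c);
  triangle : forall a b,
      comp (tensm (idm a) (lam b)) (asc a unit b) = tensm (rho a) (idm b);
  pentagon : forall a b c d,
      comp (asc a b (tens c d)) (asc (tens a b) c d)
      = comp (tensm (idm a) (asc b c d))
             (comp (asc a (tens b c) d) (tensm (asc a b c) (idm d)));
  hexagon : forall a b c,
      comp (asc b c a) (comp (sym a (tens b c)) (asc a b c))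
      = comp (tensm (idm b) (sym a c))
             (comp (asc b a c) (tensm (sym a b) (idm c)));
  sym_invol : forall a b, comp (sym b a) (sym a b) = idm (tens a b);
  (* unitary monoidal BZ/2-action: monoidal natural involution of id *)
  par : forall a, hom a a;
  par_nat : forall a b (f : hom a b), comp (par b) f = comp f (par a);
  par_invol : forall a, comp (par a) (par a) = idm a;
  par_tens : forall a b, par (tens a b) = tensm (par a) (par b);
  par_unit : par unit = idm unit;
  par_unitary_l : forall a, comp (dag (par a)) (par a) = idm a;
  par_unitary_r : forall a, comp (par a) (dag (par a)) = idm a
}.

Arguments idm {C} a : rename.
Arguments comp {C a b c} _ _ : rename.
Arguments dag {C a b} _ : rename.
Arguments tens {C} _ _ : rename.
Arguments tensm {C a b c d} _ _ : rename.
Arguments unit {C} : rename.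
Arguments lam {C} a : rename.
Arguments rho {C} a : rename.
Arguments asc {C} a b c : rename.
Arguments sym {C} a b : rename.
Arguments par {C} a : rename.

Definition is_iso {C : SMDC} {a b : ob C} (g : hom C a b) : Prop :=
  exists h : hom C b a, comp h g = idm a /\ comp g h = idm b.

Definition involution {C : SMDC} {c : ob C} (f : hom C c c) : Prop :=
  comp f f = idm c.

Definition iso_positive {C : SMDC} {c : ob C} (f : hom C c c) : Prop :=
  exists (c' : ob C) (g : hom C c c'), is_iso g /\ f = comp (dag g) g.

(** Fermionic dagger compactness, in the equivalent form stated in the paper:
    every object x admits a duality (ev : x^* ⊗ x -> 1, coev : 1 -> x ⊗ x^* )
    (zigzag identities) such that sigma_{x^*,x} ∘ ev^dagger = ((-1)^F_x ⊗ id) ∘ coev. *)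
Definition fermionically_dagger_compact (C : SMDC) : Prop :=
  forall x : ob C, exists (xs : ob C) (ev : hom C (tens xs x) unit)
                          (coev : hom C unit (tens x xs)),
    comp (rho x) (comp (tensm (idm x) ev)
        (comp (asc x xs x) (comp (tensm coev (idm x)) (dag (lam x))))) = idm x
    /\ comp (lam xs) (comp (tensm ev (idm xs))
        (comp (dag (asc xs x xs)) (comp (tensm (idm xs) coev) (dag (rho xs)))))
       = idm xs
    /\ comp (sym xs x) (dag ev) = comp (tensm (par x) (idm xs)) coev.

Record SMDFunctor (C D : SMDC) : Type := {
  fo : ob C -> ob D;
  fm : forall {a b : ob C}, hom C a b -> hom D (fo a) (fo b);
  fm_id : forall a, fm (idm a) = idm (fo a);
  fm_comp : forall a b c (f : hom C a b) (g : hom C b c),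
      fm (comp g f) = comp (fm g) (fm f);
  fm_dag : forall a b (f : hom C a b), fm (dag f) = dag (fm f);
  mu : forall a b, hom D (tens (fo a) (fo b)) (fo (tens a b));
  eps : hom D unit (fo unit);
  mu_unitary_l : forall a b, comp (dag (mu a b)) (mu a b) = idm _;
  mu_unitary_r : forall a b, comp (mu a b) (dag (mu a b)) = idm _;
  eps_unitary_l : comp (dag eps) eps = idm _;
  eps_unitary_r : comp eps (dag eps) = idm _;
  mu_nat : forall a b c d (f : hom C a b) (g : hom C c d),
      comp (mu b d) (tensm (fm f) (fm g)) = comp (fm (tensm f g)) (mu a c);
  mu_assoc : forall a b c,
      comp (fm (asc a b c)) (comp (mu (tens a b) c) (tensm (mu a b) (idm (fo c))))
      = comp (mu a (tens b c))
             (comp (tensm (idm (fo a)) (mu b c)) (asc (fo a) (fo b) (fo c)));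
  mu_lunit : forall a,
      comp (fm (lam a)) (comp (mu unit a) (tensm eps (idm (fo a)))) = lam (fo a);
  mu_runit : forall a,
      comp (fm (rho a)) (comp (mu a unit) (tensm (idm (fo a)) eps)) = rho (fo a);
  mu_sym : forall a b,
      comp (fm (sym a b)) (mu a b) = comp (mu b a) (sym (fo a) (fo b))
}.

Arguments fo {C D} F _ : rename.
Arguments fm {C D} F {a b} _ : rename.

(* Main.v *)
Require Import Defs.
From Corelib Require Import ssreflect.
Local Notation "g ∘ f" := (comp g f) (at level 40, left associativity).
Local Notation "f ⊗ g" := (tensm f g) (at level 35).
Local Notation "f †" := (dag f) (at level 20).

Lemma cA {C : SMDC} {a b c d} (f : hom C a b) (g : hom C b c) (h : hom C c d) : h ∘ g ∘ f = h ∘ (g ∘ f).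
Proof. by rewrite comp_assoc. Qed.
Lemma a2 {C : SMDC} {x y z w} {a : hom C y z} {b : hom C x y} {r : hom C x z} :
  a ∘ b = r -> forall (q : hom C w x), a ∘ (b ∘ q) = r ∘ q.
Proof. intros H q. by rewrite comp_assoc H. Qed.
Lemma a3 {C : SMDC} {x y z u w} {a : hom C y z} {b : hom C x y} {c : hom C u x} {r : hom C u z} :
  a ∘ (b ∘ c) = r -> forall (q : hom C w u), a ∘ (b ∘ (c ∘ q)) = r ∘ q.
Proof. intros H q. rewrite -H. by rewrite !comp_assoc. Qed.
Tactic Notation "rw" uconstr(t) := first [rewrite t | rewrite (a2 t) | rewrite (a3 t) | rewrite (t _) | rewrite (a2 (t _)) | rewrite (a3 (t _)) | rewrite (t _ _) | rewrite (a2 (t _ _)) | rewrite (a3 (t _ _)) | rewrite (t _ _ _) | rewrite (a2 (t _ _ _)) | rewrite (a3 (t _ _ _)) | rewrite (t _ _ _ _) | rewrite (a2 (t _ _ _ _)) | rewrite (a3 (t _ _ _ _)) | rewrite (t _ _ _ _ _) | rewrite (a2 (t _ _ _ _ _)) | rewrite (a3 (t _ _ _ _ _)) | rewrite (t _ _ _ _ _ _) | rewrite (a2 (t _ _ _ _ _ _)) | rewrite (a3 (t _ _ _ _ _ _)) | rewrite (t _ _ _ _ _ _ _) | rewrite (a2 (t _ _ _ _ _ _ _)) | rewrite (a3 (t _ _ _ _ _ _ _)) | rewrite (t _ _ _ _ _ _ _ _) | rewrite (a2 (t _ _ _ _ _ _ _ _)) | rewrite (a3 (t _ _ _ _ _ _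 _ _)) | rewrite (t _ _ _ _ _ _ _ _ _) | rewrite (a2 (t _ _ _ _ _ _ _ _ _)) | rewrite (a3 (t _ _ _ _ _ _ _ _ _)) | rewrite (t _ _ _ _ _ _ _ _ _ _) | rewrite (a2 (t _ _ _ _ _ _ _ _ _ _)) | rewrite (a3 (t _ _ _ _ _ _ _ _ _ _)) | rewrite (t _ _ _ _ _ _ _ _ _ _ _) | rewrite (a2 (t _ _ _ _ _ _ _ _ _ _ _)) | rewrite (a3 (t _ _ _ _ _ _ _ _ _ _ _))] ; rewrite ?cA.
Tactic Notation "rwr" uconstr(t) := first [rewrite (eq_sym t) | rewrite (a2 (eq_sym t)) | rewrite (a3 (eq_sym t)) | rewrite (eq_sym (t _)) | rewrite (a2 (eq_sym (t _))) | rewrite (a3 (eq_sym (t _))) | rewrite (eq_sym (t _ _)) | rewrite (a2 (eq_sym (t _ _))) | rewrite (a3 (eq_sym (t _ _))) | rewrite (eq_sym (t _ _ _)) | rewrite (a2 (eq_sym (t _ _ _))) | rewrite (a3 (eq_sym (t _ _ _))) | rewrite (eq_sym (t _ _ _ _)) | rewrite (a2 (eq_sym (t _ _ _ _))) | rewrite (a3 (eq_sym (t _ _ _ _))) | rewrite (eq_sym (t _ _ _ _ _)) | rewrite (a2 (eq_sym (t _ _ _ _ _))) | rewrite (a3 (eq_sym (t _ _ _ _ _))) | rewrite (eq_sym (t _ _ _ _ _ _)) | rewrite (a2 (eq_sym (t _ _ _ _ _ _))) | rewrite (a3 (eq_sym (t _ _ _ _ _ _))) | rewrite (eq_sym (t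 _ _ _ _ _ _ _)) | rewrite (a2 (eq_sym (t _ _ _ _ _ _ _))) | rewrite (a3 (eq_sym (t _ _ _ _ _ _ _))) | rewrite (eq_sym (t _ _ _ _ _ _ _ _)) | rewrite (a2 (eq_sym (t _ _ _ _ _ _ _ _))) | rewrite (a3 (eq_sym (t _ _ _ _ _ _ _ _))) | rewrite (eq_sym (t _ _ _ _ _ _ _ _ _)) | rewrite (a2 (eq_sym (t _ _ _ _ _ _ _ _ _))) | rewrite (a3 (eq_sym (t _ _ _ _ _ _ _ _ _))) | rewrite (eq_sym (t _ _ _ _ _ _ _ _ _ _)) | rewrite (a2 (eq_sym (t _ _ _ _ _ _ _ _ _ _))) | rewrite (a3 (eq_sym (t _ _ _ _ _ _ _ _ _ _))) | rewrite (eq_sym (t _ _ _ _ _ _ _ _ _ _ _)) | rewrite (a2 (eq_sym (t _ _ _ _ _ _ _ _ _ _ _))) | rewrite (a3 (eq_sym (t _ _ _ _ _ _ _ _ _ _ _)))] ; rewrite ?cA.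


Lemma tc {C : SMDC} {a b c a' b' c'} (f : hom C a b) (f' : hom C b c) (g : hom C a' b') (g' : hom C b' c') :
  (f' ⊗ g') ∘ (f ⊗ g) = (f' ∘ f) ⊗ (g' ∘ g).
Proof. by rewrite tens_comp. Qed.

Lemma tsplit1 {C : SMDC} {a b c d} (f : hom C a b) (g : hom C c d) :
  f ⊗ g = (f ⊗ idm d) ∘ (idm a ⊗ g).
Proof. by rewrite tc comp_id_l comp_id_r. Qed.
Lemma tsplit2 {C : SMDC} {a b c d} (f : hom C a b) (g : hom C c d) :
  f ⊗ g = (idm b ⊗ g) ∘ (f ⊗ idm c).
Proof. by rewrite tc comp_id_l comp_id_r. Qed.
Lemma xch {C : SMDC} {a b c d} (f : hom C a b) (g : hom C c d) :
  (f ⊗ idm d) ∘ (idm a ⊗ g) = (idm b ⊗ g) ∘ (f ⊗ idm c).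
Proof. by rewrite -tsplit1 -tsplit2. Qed.

Lemma unat {C : SMDC} {a b c d} (u : hom C a b) (v : hom C c d) (X : hom C a c) (Y : hom C b d) :
  v † ∘ v = idm _ -> u ∘ u † = idm _ -> v ∘ X = Y ∘ u -> v † ∘ Y = X ∘ u †.
Proof.
  intros Hv Hu H.
  transitivity (v † ∘ (Y ∘ u) ∘ u †).
  - by rewrite cA cA Hu comp_id_r.
  - by rewrite -H -(cA X v) Hv comp_id_l.
Qed.

Lemma dag_sym {C : SMDC} (a b : ob C) : (sym a b) † = sym b a.
Proof.
  rewrite -(comp_id_r _ _ _ ((sym a b) †)) -(sym_invol _ b a) comp_assoc.
  by rewrite sym_unitary_l comp_id_l.
Qed.

Lemma dag_par {C : SMDC} (a : ob C) : (par a) † = par a.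
Proof.
  rewrite -(comp_id_r _ _ _ ((par a) †)) -(par_invol _ a) comp_assoc.
  by rewrite par_unitary_l comp_id_l.
Qed.

Lemma lamd_nat {C : SMDC} a b (f : hom C a b) : (lam b) † ∘ f = (idm unit ⊗ f) ∘ (lam a) †.
Proof. apply unat; [apply lam_unitary_l | apply lam_unitary_r | apply lam_nat]. Qed.
Lemma rhod_nat {C : SMDC} a b (f : hom C a b) : (rho b) † ∘ f = (f ⊗ idm unit) ∘ (rho a) †.
Proof. apply unat; [apply rho_unitary_l | apply rho_unitary_r | apply rho_nat]. Qed.
Lemma ascd_nat {C : SMDC} a b c a' b' c' (f : hom C a a') (g : hom C b b') (h : hom C c c') :
  (asc a' b' c') † ∘ (f ⊗ (g ⊗ h)) = ((f ⊗ g) ⊗ h) ∘ (asc a b c) †.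
Proof. apply unat; [apply asc_unitary_l | apply asc_unitary_r | apply asc_nat]. Qed.

Lemma cancel_r1 {C : SMDC} a b (f g : hom C a b) : f ⊗ idm unit = g ⊗ idm unit -> f = g.
Proof.
  intro H.
  rewrite -(comp_id_r _ _ _ f) -(rho_unitary_r _ a) comp_assoc -rho_nat H.
  by rewrite rho_nat -comp_assoc rho_unitary_r comp_id_r.
Qed.
Lemma cancel_l1 {C : SMDC} a b (f g : hom C a b) : idm unit ⊗ f = idm unit ⊗ g -> f = g.
Proof.
  intro H.
  rewrite -(comp_id_r _ _ _ f) -(lam_unitary_r _ a) comp_assoc -lam_nat H.
  by rewrite lam_nat -comp_assoc lam_unitary_r comp_id_r.
Qed.
Lemma cancel_iso {C : SMDC} a b c (f g : hom C b c) (u : hom C a b) :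
  u ∘ u † = idm _ -> f ∘ u = g ∘ u -> f = g.
Proof.
  intros Hu H.
  by rewrite -(comp_id_r _ _ _ f) -(comp_id_r _ _ _ g) -Hu !comp_assoc H.
Qed.

Lemma t1c {C : SMDC} {a x y z} (f : hom C x y) (g : hom C y z) :
  idm a ⊗ (g ∘ f) = (idm a ⊗ g) ∘ (idm a ⊗ f).
Proof. by rewrite tc comp_id_l. Qed.
Lemma tc1 {C : SMDC} {a x y z} (f : hom C x y) (g : hom C y z) :
  (g ∘ f) ⊗ idm a = (g ⊗ idm a) ∘ (f ⊗ idm a).
Proof. by rewrite tc comp_id_l. Qed.

Lemma unit_comp {C : SMDC} {a b c} (u : hom C a b) (v : hom C b c) :
  u ∘ u † = idm _ -> v ∘ v † = idm _ -> (v ∘ u) ∘ (v ∘ u) † = idm _.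
Proof. intros Hu Hv. by rewrite dag_comp cA -(cA (v †)) Hu comp_id_l Hv. Qed.
Lemma unit_tens {C : SMDC} {a b c d} (u : hom C a b) (v : hom C c d) :
  u ∘ u † = idm _ -> v ∘ v † = idm _ -> (u ⊗ v) ∘ (u ⊗ v) † = idm _.
Proof. intros Hu Hv. by rewrite dag_tens tc Hu Hv tens_id. Qed.

Lemma K1gen {C : SMDC} (A b c : ob C) :
  idm A ⊗ (lam (tens b c) ∘ asc unit b c) = idm A ⊗ (lam b ⊗ idm c).
Proof.
  apply (cancel_iso _ _ _ _ _ (asc A (tens unit b) c ∘ (asc A unit b ⊗ idm c))).
  { apply unit_comp; [apply unit_tens; [apply asc_unitary_r | by rewrite dag_id comp_id_l] | apply asc_unitary_r]. }
  rewrite t1c !cA.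
  rewrite (eq_sym (pentagon _ _ _ _ _)).
  rw triangle.
  rewrite -(tens_id _ b c).
  rwr asc_nat.
  rewrite -triangle tc1.
  rw asc_nat.
  done.
Qed.

Lemma K1 {C : SMDC} (b c : ob C) : lam (tens b c) ∘ asc unit b c = lam b ⊗ idm c.
Proof. apply cancel_l1. apply K1gen. Qed.

Lemma cancel_isoL {C : SMDC} a b c (f g : hom C a b) (u : hom C b c) :
  u † ∘ u = idm _ -> u ∘ f = u ∘ g -> f = g.
Proof.
  intros Hu H.
  by rewrite -(comp_id_l _ _ _ f) -(comp_id_l _ _ _ g) -Hu -!comp_assoc H.
Qed.

Lemma K2gen {C : SMDC} (A B Cc : ob C) :
  rho (tens A B) ⊗ idm Cc = ((idm A ⊗ rho B) ∘ asc A B unit) ⊗ idm Cc.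
Proof.
  apply (cancel_isoL _ _ _ _ _ (asc A B Cc)); first apply asc_unitary_l.
  rewrite -triangle.
  rewrite -(tens_id _ A B).
  rw asc_nat.
  rw pentagon.
  rwr t1c.
  rewrite triangle.
  rwr asc_nat.
  rwr tc1.
  done.
Qed.

Lemma K2 {C : SMDC} (A B : ob C) : rho (tens A B) = (idm A ⊗ rho B) ∘ asc A B unit.
Proof. apply cancel_r1. apply K2gen. Qed.

Lemma lam_unit_tens {C : SMDC} (b : ob C) : lam (tens unit b) = idm unit ⊗ lam b.
Proof.
  apply (cancel_isoL _ _ _ _ _ (lam b)); first apply lam_unitary_l.
  by rewrite lam_nat.
Qed.

Lemma K3 {C : SMDC} : lam (@unit C) = rho unit.
Proof.
  apply cancel_r1.
  rewrite -K1 -triangle lam_unit_tens. done.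
Qed.

Definition Lam {C : SMDC} (a V : ob C) (w : hom C unit (tens a V)) (U : ob C)
  (m : hom C (tens U a) unit) : hom C U V :=
  lam V ∘ ((m ⊗ idm V) ∘ ((asc U a V) † ∘ ((idm U ⊗ w) ∘ (rho U) †))).

Lemma N1 {C : SMDC} (a V : ob C) (w : hom C unit (tens a V)) (U U' : ob C)
  (m : hom C (tens U a) unit) (u : hom C U' U) :
  Lam a V w U' (m ∘ (u ⊗ idm a)) = Lam a V w U m ∘ u.
Proof.
  unfold Lam. rewrite !cA.
  rw rhod_nat.
  rwr xch.
  rewrite -(tens_id _ a V).
  rw ascd_nat.
  rw tc. rewrite comp_id_l. done.
Qed.

Lemma Tdag {C : SMDC} (a b : ob C) : asc a unit b ∘ ((rho a) † ⊗ idm b) = idm a ⊗ (lam b) †.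
Proof.
  rewrite -(dag_id _ b) -dag_tens -triangle dag_comp dag_tens dag_id.
  rewrite comp_assoc asc_unitary_r comp_id_l. done.
Qed.

Lemma ECtail {C : SMDC} (a z U : ob C) (e : hom C (tens z a) unit) (c : hom C unit (tens a z))
  (Z1 : rho a ∘ ((idm a ⊗ e) ∘ (asc a z a ∘ ((c ⊗ idm a) ∘ (lam a) †))) = idm a) :
  rho (tens U a) ∘ ((idm (tens U a) ⊗ e) ∘ (asc (tens U a) z a ∘ (((asc U a z) † ⊗ idm a)
     ∘ (((idm U ⊗ c) ⊗ idm a) ∘ ((rho U) † ⊗ idm a))))) = idm _.
Proof.
  rewrite K2 cA.
  rewrite -(tens_id _ U a).
  rw asc_nat.
  rw pentagon.
  rewrite (a2 (eq_sym (tc1 (a:=a) ((asc U a z) †) (asc U a z)))) asc_unitary_r tens_id comp_id_l.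
  rw asc_nat.
  rewrite Tdag.
  rwr t1c. rwr t1c. rwr t1c. rwr t1c.
  rewrite Z1 tens_id. done.
Qed.

Lemma EC {C : SMDC} (a z U : ob C) (e : hom C (tens z a) unit) (c : hom C unit (tens a z))
  (Z1 : rho a ∘ ((idm a ⊗ e) ∘ (asc a z a ∘ ((c ⊗ idm a) ∘ (lam a) †))) = idm a)
  (m : hom C (tens U a) unit) :
  e ∘ (Lam a z c U m ⊗ idm a) = m.
Proof.
  unfold Lam. rewrite !tc1.
  rewrite -K1 ?cA.
  rwr lam_nat.
  rw asc_nat.
  rewrite tens_id.
  rwr xch.
  rewrite K3.
  rw rho_nat.
  rewrite ECtail // comp_id_r //.
Qed.

Lemma EU {C : SMDC} (a z U : ob C) (e : hom C (tens z a) unit) (c : hom C unit (tens a z))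
  (Z2 : lam z ∘ ((e ⊗ idm z) ∘ ((asc z a z) † ∘ ((idm z ⊗ c) ∘ (rho z) †))) = idm z)
  (k : hom C U z) :
  Lam a z c U (e ∘ (k ⊗ idm a)) = k.
Proof. rewrite N1. unfold Lam. rewrite Z2 comp_id_l. done. Qed.

Lemma K2d {C : SMDC} (a b : ob C) : idm a ⊗ (rho b) † = asc a b unit ∘ (rho (tens a b)) †.
Proof. rewrite K2 dag_comp dag_tens dag_id comp_assoc asc_unitary_r comp_id_l. done. Qed.

Lemma K1d {C : SMDC} (b c : ob C) : (asc unit b c) † ∘ (lam (tens b c)) † = (lam b) † ⊗ idm c.
Proof. rewrite -dag_comp K1 dag_tens dag_id. done. Qed.

Lemma Pd {C : SMDC} (a b c d : ob C) :
  (idm a ⊗ (asc b c d) †) ∘ asc a b (tens c d)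
  = asc a (tens b c) d ∘ ((asc a b c ⊗ idm d) ∘ (asc (tens a b) c d) †).
Proof.
  transitivity ((idm a ⊗ (asc b c d) †) ∘ (asc a b (tens c d) ∘ (asc (tens a b) c d ∘ (asc (tens a b) c d) †))).
  { by rewrite asc_unitary_r comp_id_r. }
  rw pentagon.
  rwr t1c. rewrite asc_unitary_l tens_id comp_id_l. done.
Qed.

Lemma CS {C : SMDC} (a z V : ob C) (e : hom C (tens z a) unit) (c : hom C unit (tens a z))
  (Z1 : rho a ∘ ((idm a ⊗ e) ∘ (asc a z a ∘ ((c ⊗ idm a) ∘ (lam a) †))) = idm a)
  (w : hom C unit (tens a V)) :
  (idm a ⊗ Lam a V w z e) ∘ c = w.
Proof.
  unfold Lam. rewrite !t1c !cA.
  rewrite K2d ?cA.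
  rw rhod_nat.
  rwr asc_nat.
  rewrite tens_id.
  rwr xch.
  rewrite -K3.
  rwr lamd_nat.
  rw Pd.
  rewrite -(tens_id _ a V).
  rw ascd_nat.
  rw K1d.
  rwr asc_nat.
  rw triangle.
  rwr tc1. rwr tc1. rwr tc1. rwr tc1.
  rewrite Z1 tens_id comp_id_l. done.
Qed.

Lemma core {D : SMDC} (a : ob D) (P Q : hom D a a)
  (PP : P ∘ P = idm a) (QQ : Q ∘ Q = idm a) (PQc : P ∘ Q = Q ∘ P) (Pdg : P † = P) (Qdg : Q † = Q)
  (z1 : ob D) (e1 : hom D (tens z1 a) unit) (c1 : hom D unit (tens a z1))
  (Z11 : rho a ∘ ((idm a ⊗ e1) ∘ (asc a z1 a ∘ ((c1 ⊗ idm a) ∘ (lam a) †))) = idm a)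
  (Z21 : lam z1 ∘ ((e1 ⊗ idm z1) ∘ ((asc z1 a z1) † ∘ ((idm z1 ⊗ c1) ∘ (rho z1) †))) = idm z1)
  (T1 : sym z1 a ∘ e1 † = (Q ⊗ idm z1) ∘ c1)
  (z2 : ob D) (e2 : hom D (tens z2 a) unit) (c2 : hom D unit (tens a z2))
  (Z12 : rho a ∘ ((idm a ⊗ e2) ∘ (asc a z2 a ∘ ((c2 ⊗ idm a) ∘ (lam a) †))) = idm a)
  (Z22 : lam z2 ∘ ((e2 ⊗ idm z2) ∘ ((asc z2 a z2) † ∘ ((idm z2 ⊗ c2) ∘ (rho z2) †))) = idm z2)
  (T2 : sym z2 a ∘ e2 † = (P ⊗ idm z2) ∘ c2)
  (hpos : forall (c : ob D) (f : hom D c c), involution f -> iso_positive f -> f = idm c) :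
  Q = P.
Proof.
  have hg : Lam a z2 c2 z1 e1 ∘ Lam a z1 c1 z2 e2 = idm z2.
  { rewrite -N1 (EC _ _ _ e1 c1 Z11). exact Z22. }
  have gh : Lam a z1 c1 z2 e2 ∘ Lam a z2 c2 z1 e1 = idm z1.
  { rewrite -N1 (EC _ _ _ e2 c2 Z12). exact Z21. }
  have E1 : e1 ∘ (Lam a z1 c1 z2 e2 ⊗ idm a) = e2 := EC _ _ _ e1 c1 Z11 e2.
  have cs : (idm a ⊗ Lam a z1 c1 z2 e2) ∘ c2 = c1 := CS _ _ _ e2 c2 Z12 c1.
  have e2d : e2 † = sym a z2 ∘ ((P ⊗ idm z2) ∘ c2).
  { by rewrite -T2 comp_assoc sym_invol comp_id_l. }
  have c1e : c1 = (Q ⊗ idm z1) ∘ (sym z1 a ∘ e1 †).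
  { by rewrite T1 comp_assoc tc QQ comp_id_l tens_id comp_id_l. }
  have c1d : c1 † = e1 ∘ (sym a z1 ∘ (Q ⊗ idm z1)).
  { by rewrite {1}c1e !dag_comp dag_invol dag_sym dag_tens dag_id Qdg cA. }
  have gd : (Lam a z1 c1 z2 e2) † = Lam a z2 c2 z1 (e1 ∘ (idm z1 ⊗ (Q ∘ P))).
  { rewrite -(EU _ _ _ e2 c2 Z22 ((Lam a z1 c1 z2 e2) †)). f_equal.
    transitivity (((Lam a z1 c1 z2 e2 ⊗ idm a) ∘ e2 †) †).
    { by rewrite dag_comp dag_invol dag_tens dag_id. }
    rewrite e2d.
    rwr sym_nat.
    rwr xch.
    rw cs.
    rewrite !dag_comp c1d dag_tens dag_id Pdg dag_sym !cA.
    rw tc. rewrite comp_id_l.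
    rw sym_nat.
    rw sym_invol. rewrite comp_id_r. done. }
  have fdef : (Lam a z1 c1 z2 e2) † ∘ Lam a z1 c1 z2 e2 = Lam a z2 c2 z2 (e2 ∘ (idm z2 ⊗ (Q ∘ P))).
  { rewrite gd -N1. f_equal. rewrite cA -xch -cA E1. done. }
  have EF : e2 ∘ (Lam a z2 c2 z2 (e2 ∘ (idm z2 ⊗ (Q ∘ P))) ⊗ idm a) = e2 ∘ (idm z2 ⊗ (Q ∘ P))
    := EC _ _ _ e2 c2 Z12 _.
  have QP2 : (Q ∘ P) ∘ (Q ∘ P) = idm a.
  { by rewrite cA -(cA P Q P) PQc cA PP comp_id_r QQ. }
  have inv : involution (Lam a z2 c2 z2 (e2 ∘ (idm z2 ⊗ (Q ∘ P)))).
  { unfold involution. rewrite -N1 cA -xch -cA EF cA -t1c QP2 tens_id comp_id_r. exact Z22. }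
  have ip : iso_positive (Lam a z2 c2 z2 (e2 ∘ (idm z2 ⊗ (Q ∘ P)))).
  { exists z1. exists (Lam a z1 c1 z2 e2). split.
    - exists (Lam a z2 c2 z1 e1). split; assumption.
    - by rewrite fdef. }
  have f1 := hpos _ _ inv ip.
  have E : e2 ∘ (idm z2 ⊗ (Q ∘ P)) = e2.
  { by rewrite -EF f1 tens_id comp_id_r. }
  have QP1 : Q ∘ P = idm a.
  { transitivity ((rho a ∘ ((idm a ⊗ e2) ∘ (asc a z2 a ∘ ((c2 ⊗ idm a) ∘ (lam a) †)))) ∘ (Q ∘ P)).
    { by rewrite Z12 comp_id_l. }
    rewrite !cA.
    rw lamd_nat.
    rw xch.
    rewrite -(tens_id _ a z2).
    rw asc_nat.
    rwr t1c. rewrite E. exact Z12. }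
  by rewrite -(comp_id_r _ _ _ Q) -PP comp_assoc QP1 comp_id_l.
Qed.


Lemma Fl {C D : SMDC} (F : SMDFunctor C D) (a : ob C) :
  fm F (lam a) = lam (fo F a) ∘ (((eps _ _ F) † ⊗ idm (fo F a)) ∘ (mu _ _ F unit a) †).
Proof.
  rewrite -(mu_lunit _ _ F a) !cA.
  rw tc. rewrite eps_unitary_r comp_id_l tens_id comp_id_l mu_unitary_r comp_id_r. done.
Qed.

Lemma Fr {C D : SMDC} (F : SMDFunctor C D) (a : ob C) :
  fm F (rho a) = rho (fo F a) ∘ ((idm (fo F a) ⊗ (eps _ _ F) †) ∘ (mu _ _ F a unit) †).
Proof.
  rewrite -(mu_runit _ _ F a) !cA.
  rw tc. rewrite eps_unitary_r comp_id_l tens_id comp_id_l mu_unitary_r comp_id_r. done.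
Qed.

Lemma Fa {C D : SMDC} (F : SMDFunctor C D) (a b c : ob C) :
  fm F (asc a b c) = mu _ _ F a (tens b c) ∘ ((idm (fo F a) ⊗ mu _ _ F b c) ∘ (asc (fo F a) (fo F b) (fo F c)
     ∘ (((mu _ _ F a b) † ⊗ idm (fo F c)) ∘ (mu _ _ F (tens a b) c) †))).
Proof.
  transitivity (fm F (asc a b c) ∘ (mu _ _ F (tens a b) c ∘ ((mu _ _ F a b ⊗ idm (fo F c))
     ∘ (((mu _ _ F a b) † ⊗ idm (fo F c)) ∘ (mu _ _ F (tens a b) c) †)))).
  { rw tc. rewrite mu_unitary_r comp_id_l tens_id comp_id_l mu_unitary_r comp_id_r. done. }
  rw mu_assoc. done.
Qed.

Lemma Ft {C D : SMDC} (F : SMDFunctor C D) {a b c d : ob C} (f : hom C a b) (g : hom C c d) :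
  fm F (f ⊗ g) = mu _ _ F b d ∘ ((fm F f ⊗ fm F g) ∘ (mu _ _ F a c) †).
Proof.
  rw mu_nat. rewrite mu_unitary_r comp_id_r. done.
Qed.

Lemma Fsym {C D : SMDC} (F : SMDFunctor C D) (a b : ob C) :
  sym (fo F a) (fo F b) ∘ (mu _ _ F a b) † = (mu _ _ F b a) † ∘ fm F (sym a b).
Proof.
  symmetry. apply unat; [apply mu_unitary_l | apply mu_unitary_r | symmetry; apply mu_sym].
Qed.

Lemma transport {C D : SMDC} (F : SMDFunctor C D) (x xs : ob C)
  (ev : hom C (tens xs x) unit) (coev : hom C unit (tens x xs))
  (Z1 : rho x ∘ ((idm x ⊗ ev) ∘ (asc x xs x ∘ ((coev ⊗ idm x) ∘ (lam x) †))) = idm x)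
  (Z2 : lam xs ∘ ((ev ⊗ idm xs) ∘ ((asc xs x xs) † ∘ ((idm xs ⊗ coev) ∘ (rho xs) †))) = idm xs)
  (T : sym xs x ∘ ev † = (par x ⊗ idm xs) ∘ coev) :
  let a := fo F x in let z := fo F xs in
  let e := (eps _ _ F) † ∘ (fm F ev ∘ mu _ _ F xs x) in
  let c := (mu _ _ F x xs) † ∘ (fm F coev ∘ eps _ _ F) in
  rho a ∘ ((idm a ⊗ e) ∘ (asc a z a ∘ ((c ⊗ idm a) ∘ (lam a) †))) = idm a /\
  lam z ∘ ((e ⊗ idm z) ∘ ((asc z a z) † ∘ ((idm z ⊗ c) ∘ (rho z) †))) = idm z /\
  sym z a ∘ e † = (fm F (par x) ⊗ idm z) ∘ c.
Proof.
  intros a z e c. subst a z e c.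
  split; [|split].
  - have H := f_equal (fm F) Z1.
    rewrite !fm_comp !fm_dag fm_id Fr Fa !Ft Fl !fm_id in H.
    rewrite !dag_comp !dag_tens !dag_invol !dag_id ?cA in H.
    rewrite !t1c !tc1 ?cA.
    etransitivity; [|exact H].
    repeat (rw mu_unitary_l; rewrite ?comp_id_l).
    done.
  - have H := f_equal (fm F) Z2.
    rewrite !fm_comp !fm_dag fm_id Fr Fa !Ft Fl !fm_id in H.
    rewrite !dag_comp !dag_tens !dag_invol !dag_id ?cA in H.
    rewrite !t1c !tc1 ?cA.
    etransitivity; [|exact H].
    repeat (rw mu_unitary_l; rewrite ?comp_id_l).
    done.
  - rewrite !dag_comp dag_invol ?cA.
    rw Fsym.
    rewrite -fm_dag.
    rwr fm_comp.
    rewrite T fm_comp Ft fm_id ?cA.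
    rw mu_unitary_l. rewrite comp_id_l. done.
Qed.

Theorem mainTheorem3 (C D : SMDC) (F : SMDFunctor C D)
  (hC : fermionically_dagger_compact C)
  (hD : fermionically_dagger_compact D)
  (hpos : forall (c : ob D) (f : hom D c c),
            involution f -> iso_positive f -> f = idm c) :
  forall x : ob C, fm F (par x) = par (fo F x).
Proof.
  intro x.
  destruct (hC x) as [xs [ev [coev [Z1 [Z2 T]]]]].
  destruct (transport F x xs ev coev Z1 Z2 T) as [Y1 [Y2 YT]].
  destruct (hD (fo F x)) as [ys [e2 [c2 [W1 [W2 WT]]]]].
  eapply core.
  - apply par_invol.
  - rewrite -fm_comp par_invol fm_id. reflexivity.
  - apply par_nat.
  - apply dag_par.
  - rewrite -fm_dag dag_par. reflexivity.
  - exact Y1.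
  - exact Y2.
  - exact YT.
  - exact W1.
  - exact W2.
  - exact WT.
  - exact hpos.
Qed.
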